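(* Let $X$ be a compact subset of $\mathbb{C}^2$, let $m,n$ be positive integers, and let $\pi:\mathbb{C}^2\to\mathbb{C}^2$ be defined by $\pi(z,w)=(z^m,w^n)$. Suppose $\pi^{-1}(X)=\bigcup_{1\le k\le m,\,1\le l\le n}X_{kl}$, where $X_{11}$ is compact and $$X_{kl}=\Big\{\Big(e^{2\pi i(k-1)/m}z,\; e^{2\pi i(l-1)/n}w\Big): (z,w)\in X_{11}\Big\}\quad (1\le k\le m,\ 1\le l\le n).$$ If $R(\pi^{-1}(X))=C(\pi^{-1}(X))$, then $R(X)=C(X)$.
   Context: For a compact set $K\subset\mathbb{C}^2$: $C(K)$ is the algebra of continuous complex-valued functions on $K$ with the sup norm, and $R(K)$ is the closure in $C(K)$ of the rational functions with poles off $K$. *)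

(* Defs.v *)
From HB Require Import structures.
From mathcomp Require Import all_boot all_order all_algebra.
From mathcomp Require Import all_classical all_reals all_analysis.
From mathcomp Require Import complex.
Import numFieldNormedType.Exports.
Import Order.TTheory GRing.Theory Num.Theory.
Local Open Scope ring_scope.
Local Open Scope classical_set_scope.

Set Implicit Arguments.
Unset Strict Implicit.
Unset Printing Implicit Defensive.

Definition Cx (R : realType) := (R[i])^o.
Definition C2 (R : realType) := (Cx R * Cx R)%type.

(* Evaluation of a polynomial in two variables (z,w):
   p = sum_j p_j(z) w^j with p : {poly {poly C}}. *)
Definition ev2 (R : realType) (p : {poly {poly R[i]}}) (x : C2 R) : R[i] :=
  (p.[(x.2 : R[i])%:P]).[x.1 : R[i]].

Definition inC (R : realType) (K : set (C2 R)) (f : C2 R -> Cx R) : Prop :=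
  {within K, continuous f}.

Definition inRat (R : realType) (K : set (C2 R)) (f : C2 R -> Cx R) : Prop :=
  forall e : R, 0 < e ->
    exists p q : {poly {poly R[i]}},
      (forall x, K x -> ev2 q x != 0) /\
      (forall x, K x -> `|(f x : R[i]) - ev2 p x / ev2 q x| < (e%:C)%C).

Definition R_eq_C (R : realType) (K : set (C2 R)) : Prop :=
  forall f : C2 R -> Cx R, inRat K f <-> inC K f.

Definition expi (R : realType) (t : R) : R[i] := Complex (cos t) (sin t).

Definition unity_rt (R : realType) (m j : nat) : R[i] :=
  expi ((2 * pi * j%:R / m%:R) : R).

Definition powmap (R : realType) (m n : nat) (x : C2 R) : C2 R :=
  (((x.1 : R[i]) ^+ m : Cx R), ((x.2 : R[i]) ^+ n : Cx R)).

(* X_{kl} for k,l starting at 1: here k = k'+1, l = l'+1 with k' : 'I_m. *)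
Definition rot_set (R : realType) (m n : nat) (k l : nat) (X11 : set (C2 R))
  : set (C2 R) :=
  [set x | exists2 y, X11 y &
     x = ((unity_rt R m k * (y.1 : R[i]) : Cx R),
          (unity_rt R n l * (y.2 : R[i]) : Cx R))].

(* Main.v *)
Require Import Defs.
From HB Require Import structures.
From mathcomp Require Import all_boot all_order all_algebra.
From mathcomp Require Import all_classical all_reals all_analysis.
From mathcomp Require Import complex.
From mathcomp Require cyclic separable cyclotomic.
From mathcomp Require Import ring.
Import numFieldNormedType.Exports.
Import Order.TTheory GRing.Theory Num.Theory.
Local Open Scope ring_scope.
Local Open Scope classical_set_scope.
Section Alg.
Variable R : realType.
Local Notation C := (R[i]).
Implicit Types (P Q : {poly {poly C}}) (x : C2 R).

Lemma prim_ex n : (n > 0)%N -> {z : C | n.-primitive_root z}.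
Proof.
pose p : {poly C} := 'X^n - 1; have [r Dp] := closed_field_poly_normal p.
move=> n_gt0; apply/sigW; rewrite (monicP _) ?monicXnsubC // scale1r in Dp.
have rn1: all n.-unity_root r by apply/allP=> z; rewrite -root_prod_XsubC -Dp.
have sz_r: (n < (size r).+1)%N.
  by rewrite -(size_prod_XsubC r id) -Dp size_XnsubC.
have [|z] := hasP (cyclic.has_prim_root n_gt0 rn1 _ sz_r); last by exists z.
by rewrite -separable.separable_prod_XsubC -Dp cyclotomic.separable_Xn_sub_1 // pnatr_eq0 -lt0n.
Qed.

Lemma ev2E (P : {poly {poly C}}) (x : C2 R) :
  ev2 P x = \sum_(j < size P) (P`_j).[x.1 : C] * (x.2 : C) ^+ j.
Proof.
rewrite /ev2 (horner_coef P) horner_sum; apply: eq_bigr => j _.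
by rewrite hornerM -rmorphXn hornerC.
Qed.

Lemma ev2D P Q x : ev2 (P + Q) x = ev2 P x + ev2 Q x.
Proof. by rewrite /ev2 hornerD hornerD. Qed.
Lemma ev2M P Q x : ev2 (P * Q) x = ev2 P x * ev2 Q x.
Proof. by rewrite /ev2 hornerM hornerM. Qed.
Lemma ev2C (c : C) x : ev2 (c%:P%:P) x = c.
Proof. by rewrite /ev2 !hornerC. Qed.
Lemma ev2_sum (I : finType) (F : I -> {poly {poly C}}) (Pr : pred I) x :
  ev2 (\sum_(i | Pr i) F i) x = \sum_(i | Pr i) ev2 (F i) x.
Proof.
have h0 : ev2 0 x = 0 by rewrite /ev2 !horner0.
exact: (big_morph (fun P => ev2 P x) (fun P Q => ev2D P Q x) h0).
Qed.
Lemma ev2_prod (I : finType) (F : I -> {poly {poly C}}) (Pr : pred I) x :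
  ev2 (\prod_(i | Pr i) F i) x = \prod_(i | Pr i) ev2 (F i) x.
Proof.
have h0 : ev2 1 x = 1 by rewrite /ev2 !hornerC.
exact: (big_morph (fun P => ev2 P x) (fun P Q => ev2M P Q x) h0).
Qed.

Definition sc1 (c : C) (p : {poly C}) : {poly C} :=
  \sum_(i < size p) (p`_i * c ^+ i) *: 'X^i.
Lemma sc1E c p z : (sc1 c p).[z] = p.[c * z].
Proof.
rewrite /sc1 horner_sum [in RHS]horner_coef; apply: eq_bigr => i _.
by rewrite hornerZ hornerXn exprMn mulrA.
Qed.

Definition sc2 (a b : C) (P : {poly {poly C}}) : {poly {poly C}} :=
  \sum_(j < size P) (sc1 a P`_j * (b ^+ j)%:P) *: 'X^j.

Lemma sc2E a b P (x : C2 R) :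
  ev2 (sc2 a b P) x = ev2 P (((a * (x.1 : C)) : Cx R), ((b * (x.2 : C)) : Cx R)).
Proof.
rewrite [RHS]ev2E /ev2 /sc2 horner_sum horner_sum; apply: eq_bigr => j _ /=.
rewrite hornerZ hornerXn hornerM hornerM hornerC -rmorphXn hornerC sc1E.
by rewrite exprMn mulrA.
Qed.

Definition dec1 (m : nat) (p : {poly C}) : {poly C} :=
  \sum_(i < size p) (if (m %| i)%N then p`_i *: 'X^(i %/ m) else 0).

Lemma dec1E m p z : (dec1 m p).[z ^+ m] =
  \sum_(i < size p) (if (m %| i)%N then p`_i * z ^+ i else 0).
Proof.
rewrite /dec1 horner_sum; apply: eq_bigr => i _.
case: ifP => [mi|_]; last by rewrite horner0.
by rewrite hornerZ hornerXn -exprM mulnC divnK.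
Qed.

Definition dec2 (m n : nat) (P : {poly {poly C}}) : {poly {poly C}} :=
  \sum_(j < size P) (if (n %| j)%N then dec1 m P`_j *: 'X^(j %/ n) else 0).

Lemma dec2E m n P (x : C2 R) :
  ev2 (dec2 m n P) (powmap m n x) =
  \sum_(j < size P) (if (n %| j)%N then (dec1 m P`_j).[(x.1 : C) ^+ m] * (x.2 : C) ^+ j else 0).
Proof.
rewrite /ev2 /dec2 horner_sum horner_sum; apply: eq_bigr => j _ /=.
case: ifP => [nj|_]; last by rewrite !horner0.
by rewrite hornerZ hornerXn hornerM -polyC_exp hornerC -exprM mulnC divnK.
Qed.

Lemma sum_rt m (w : C) i : m.-primitive_root w ->
  \sum_(k < m) (w ^+ k) ^+ i = if (m %| i)%N then m%:R else 0.
Proof.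
move=> pw; have m0 := prim_order_gt0 pw.
case: ifP => [mi|nmi].
  rewrite (eq_bigr (fun _ => 1)) ?sumr_const ?card_ord //.
  move=> k _; rewrite exprAC.
  have /eqP -> : w ^+ i == 1 by rewrite -(prim_order_dvd pw).
  exact: expr1n.
have u1 : w ^+ i != 1 by rewrite -(prim_order_dvd pw) nmi.
have : (w ^+ i - 1) * \sum_(k < m) (w ^+ k) ^+ i = 0.
  rewrite (eq_bigr (fun k : 'I_m => (w ^+ i) ^+ k)); last by move=> k _; rewrite -!exprM mulnC.
  by rewrite -subrX1 -exprM mulnC exprM (prim_expr_order pw) expr1n subrr.
by move/eqP; rewrite mulf_eq0 subr_eq0 (negbTE u1) /= => /eqP.
Qed.


Lemma filt1 m (w : C) (p : {poly C}) (z : C) : m.-primitive_root w ->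
  \sum_(k < m) p.[w ^+ k * z] = m%:R * (dec1 m p).[z ^+ m].
Proof.
move=> pw; rewrite dec1E mulr_sumr.
under eq_bigr do rewrite horner_coef.
rewrite exchange_big /=; apply: eq_bigr => i _.
transitivity (p`_i * z ^+ i * \sum_(k < m) (w ^+ k) ^+ i).
  by rewrite mulr_sumr; apply: eq_bigr => k _; rewrite exprMn; ring.
by rewrite (sum_rt _ _ _ pw); case: ifP => _; ring.
Qed.

Lemma filt2 m n (w e : C) P x : m.-primitive_root w -> n.-primitive_root e ->
  \sum_(k < m) \sum_(l < n)
     ev2 P (((w ^+ k * (x.1 : C)) : Cx R), ((e ^+ l * (x.2 : C)) : Cx R))
  = (m * n)%:R * ev2 (dec2 m n P) (powmap m n x).
Proof.
move=> pw pe; rewrite dec2E mulr_sumr.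
under eq_bigr => k _.
  under eq_bigr => l _ do rewrite ev2E.
  over.
rewrite (eq_bigr (fun k : 'I_m => \sum_(j < size P) \sum_(l < n)
   (P`_j).[w ^+ k * x.1] * (e ^+ l * x.2) ^+ j)); last first.
  by move=> k _; rewrite exchange_big.
rewrite exchange_big /=; apply: eq_bigr => j _.
transitivity (\sum_(k < m) (P`_j).[w ^+ k * x.1] * ((x.2 : C) ^+ j *
   \sum_(l < n) (e ^+ l) ^+ j)).
  apply: eq_bigr => k _; rewrite !mulr_sumr; apply: eq_bigr => l _.
  rewrite exprMn; ring.
by rewrite -mulr_suml (sum_rt _ _ _ pe) (filt1 _ _ _ _ pw); case: ifP => _; rewrite ?natrM; ring.
Qed.

End Alg.
Arguments sc1 {R}.
Arguments sc2 {R}.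
Arguments dec1 {R}.
Arguments dec2 {R}.

Section Grp.
Variable R : realType.
Local Notation C := (R[i]).
Variables (m n : nat) (w e : C).
Hypotheses (pw : m.-primitive_root w) (pe : n.-primitive_root e).
Implicit Types (P Q : {poly {poly C}}) (x : C2 R).

Let hm : (0 < m)%N := prim_order_gt0 pw.
Let hn : (0 < n)%N := prim_order_gt0 pe.

Definition addo k (hk : (0 < k)%N) (a b : 'I_k) : 'I_k := Ordinal (ltn_pmod (a + b) hk).
Arguments addo {k} hk a b.

Lemma addo_inj k (hk : (0 < k)%N) (a : 'I_k) : injective (addo hk a).
Proof.
move=> b c /(congr1 val) /= /eqP; rewrite eqn_modDl !modn_small // => /eqP bc.
exact: val_inj.
Qed.

Definition shift (g h : 'I_m * 'I_n) : 'I_m * 'I_n := (addo hm g.1 h.1, addo hn g.2 h.2).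

Lemma shift_inj g : injective (shift g).
Proof.
move=> [a b] [c d] H.
have /= H1 := congr1 fst H; have /= H2 := congr1 snd H.
by rewrite (addo_inj _ _ _ _ _ H1) (addo_inj _ _ _ _ _ H2).
Qed.

Definition gx (h : 'I_m * 'I_n) x : C2 R :=
  (((w ^+ h.1 * (x.1 : C)) : Cx R), ((e ^+ h.2 * (x.2 : C)) : Cx R)).

Lemma gx_comp g h x : gx h (gx g x) = gx (shift g h) x.
Proof.
rewrite /gx /shift /= (prim_expr_mod pw) (prim_expr_mod pe) !exprD.
by congr (_, _); rewrite mulrA [X in X * _ = _]mulrC.
Qed.

Lemma powmap_gx h x : powmap m n (gx h x) = powmap m n x.
Proof.
rewrite /powmap /gx /= !exprMn exprAC (prim_expr_order pw) expr1n mul1r.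
by rewrite exprAC (prim_expr_order pe) expr1n mul1r.
Qed.

Lemma filt P x :
  (m * n)%:R * ev2 (dec2 m n P) (powmap m n x) = \sum_(h : 'I_m * 'I_n) ev2 P (gx h x).
Proof. by rewrite -(filt2 _ _ _ _ _ _ _ pw pe) pair_big. Qed.

Lemma sum_shift (F : 'I_m * 'I_n -> C) g :
  \sum_h F (shift g h) = \sum_h F h.
Proof. by rewrite [RHS](reindex_inj (@shift_inj g)). Qed.

Lemma prod_shift (F : 'I_m * 'I_n -> C) g :
  \prod_h F (shift g h) = \prod_h F h.
Proof. by rewrite [RHS](reindex_inj (@shift_inj g)). Qed.

Definition scg (h : 'I_m * 'I_n) P := sc2 (w ^+ h.1) (e ^+ h.2) P.

Lemma scgE h P x : ev2 (scg h P) x = ev2 P (gx h x).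
Proof. by rewrite /scg sc2E. Qed.

Definition Qp q := \prod_(h : 'I_m * 'I_n) scg h q.
Definition Np p q := (((m * n)%:R^-1 : C)%:P%:P) *
   \sum_(h : 'I_m * 'I_n) (scg h p * \prod_(h' | h' != h) scg h' q).

Lemma QpE q x : ev2 (Qp q) x = \prod_h ev2 q (gx h x).
Proof. by rewrite /Qp ev2_prod; apply: eq_bigr => h _; rewrite scgE. Qed.

Lemma NpE p q x : (forall h, ev2 q (gx h x) != 0) ->
  ev2 (Np p q) x = (m * n)%:R^-1 * ev2 (Qp q) x *
     \sum_h (ev2 p (gx h x) / ev2 q (gx h x)).
Proof.
move=> nz; rewrite /Np ev2M ev2C ev2_sum -mulrA; congr (_ * _); rewrite mulr_sumr.
apply: eq_bigr => h _; rewrite ev2M ev2_prod scgE QpE [in RHS](bigD1 h) //=.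
under eq_bigr do rewrite scgE.
by field; rewrite nz.
Qed.

Lemma Qp_inv q x g : ev2 (Qp q) (gx g x) = ev2 (Qp q) x.
Proof.
rewrite !QpE; under eq_bigr do rewrite gx_comp.
exact: (prod_shift (fun h => ev2 q (gx h x))).
Qed.

Lemma S_inv p q x g : \sum_h (ev2 p (gx h (gx g x)) / ev2 q (gx h (gx g x))) =
   \sum_h (ev2 p (gx h x) / ev2 q (gx h x)).
Proof.
under eq_bigr do rewrite gx_comp.
exact: (sum_shift (fun h => ev2 p (gx h x) / ev2 q (gx h x))).
Qed.

Lemma card_pair : #|{: 'I_m * 'I_n}| = (m * n)%N.
Proof. by rewrite card_prod !card_ord. Qed.

Lemma mn_neq0 : ((m * n)%:R : C) != 0.
Proof. by rewrite pnatr_eq0 muln_eq0 negb_or -!lt0n hm hn. Qed.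

End Grp.
Arguments gx {R m n} w e h x.
Arguments Qp {R m n} w e q.
Arguments Np {R m n} w e p q.
Arguments gx_comp {R m n w e} pw pe g h x.
Arguments powmap_gx {R m n w e} pw pe h x.
Arguments filt {R m n w e} pw pe P x.
Arguments NpE {R m n w e} p q x _.
Arguments QpE {R m n w e} q x.
Arguments Qp_inv {R m n w e} pw pe q x g.
Arguments S_inv {R m n w e} pw pe p q x g.
Arguments mn_neq0 {R m n w e} pw pe.
Arguments prim_ex {R n}.
Section Top.
Variable R : realType.
Local Notation C := (R[i]).
Implicit Types (P Q : {poly {poly C}}) (x : C2 R).

Lemma cont_poly (p : {poly C}) : continuous (fun z : Cx R => (p.[z : C] : Cx R)).
Proof.
elim/poly_ind: p => [|p c IH].
  have -> : (fun z : Cx R => ((0 : {poly C}).[z : C] : Cx R)) = (fun _ => 0).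
    by apply: funext => ?; rewrite horner0.
  exact: cst_continuous.
have -> : (fun z : Cx R => ((p * 'X + c%:P).[z : C] : Cx R)) =
   (((fun z : Cx R => (p.[z : C] : Cx R)) \* id) + cst (c : Cx R)).
  by apply: funext => ?; rewrite hornerMXaddC.
move=> z; apply: continuousD; last exact: cst_continuous.
apply: continuousM; [exact: IH | exact: cvg_id].
Qed.

Lemma cont_ev2 P : continuous (fun x : C2 R => (ev2 P x : Cx R)).
Proof.
elim/poly_ind: P => [|P c IH].
  have -> : (fun x : C2 R => (ev2 0 x : Cx R)) = (fun _ => 0).
    by apply: funext => ?; rewrite /ev2 !horner0.
  exact: cst_continuous.
have -> : (fun x : C2 R => (ev2 (P * 'X + c%:P) x : Cx R)) =
   (((fun x : C2 R => (ev2 P x : Cx R)) \* (fun x : C2 R => x.2)) +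
     ((fun z : Cx R => (c.[z : C] : Cx R)) \o fst)).
  by apply: funext => y; rewrite /ev2 /= hornerMXaddC hornerD hornerM hornerC.
move=> x; apply: continuousD.
  apply: continuousM; [exact: IH | exact: cvg_snd].
apply: continuous_comp; first exact: cvg_fst.
exact: cont_poly.
Qed.

End Top.
Section Top2.
Variable R : realType.
Local Notation C := (R[i]).
Implicit Types (P Q : {poly {poly C}}) (x : C2 R).

Lemma pos_complex (eps : C) : 0 < eps -> eps = ((complex.Re eps)%:C)%C /\ 0 < complex.Re eps.
Proof.
rewrite ltcE => /andP[/eqP hI hR]; split => //.
by case: eps hI hR => a b /= -> _.
Qed.

Lemma inRat_inC (K : set (C2 R)) f : inRat K f -> inC K f.
Proof.
move=> hR; rewrite /inC subspace_continuousP => x Kx.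
apply/cvgrPdist_lt => eps eps0.
have [epsE eR] := pos_complex _ eps0.
set d := complex.Re eps / 3.
have d0 : 0 < d by rewrite divr_gt0.
have [p [q [qnz hpq]]] := hR d d0.
have rc : (fun t => (ev2 p t / ev2 q t : Cx R)) @ nbhs x --> (ev2 p x / ev2 q x : Cx R).
  apply: cvgM; first exact: cont_ev2.
  by apply: cvgV; [exact: qnz | exact: cont_ev2].
have dC0 : (0 : C) < (d%:C)%C by rewrite ltcR.
move/cvgrPdist_lt: rc => /(_ (d%:C)%C dC0) rnear.
near=> t.
have Kt : K t by near: t; exact: near_withinT.
have rt : `|ev2 p x / ev2 q x - ev2 p t / ev2 q t| < (d%:C)%C.
  near: t; apply: cvg_within; exact: rnear.
have h1 := hpq x Kx; have h2 := hpq t Kt.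
have -> : (f x : C) - f t = ((f x : C) - ev2 p x / ev2 q x) +
   (ev2 p x / ev2 q x - ev2 p t / ev2 q t) - ((f t : C) - ev2 p t / ev2 q t).
  by ring.
rewrite epsE.
have -> : complex.Re eps = d + d + d by rewrite /d; field.
rewrite !rmorphD /=.
apply: (le_lt_trans (ler_normB _ _)).
apply: ltrD; last by [].
apply: (le_lt_trans (ler_normD _ _)).
exact: ltrD.
Unshelve. all: by end_near.
Qed.

End Top2.

Arguments inRat_inC {R K f}.

Section Top3.
Variable R : realType.
Local Notation C := (R[i]).

Lemma cont_powmap m n : continuous (powmap m n : C2 R -> C2 R).
Proof.
move=> x.
have E1 : (fun y : C2 R => (((y.1 : C) ^+ m) : Cx R)) = (fun z : Cx R => ((('X^m : {poly C}).[z : C]) : Cx R)) \o fst.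
  by apply: funext => y; rewrite /= hornerXn.
have E2 : (fun y : C2 R => (((y.2 : C) ^+ n) : Cx R)) = (fun z : Cx R => ((('X^n : {poly C}).[z : C]) : Cx R)) \o snd.
  by apply: funext => y; rewrite /= hornerXn.
have c1 : {for x, continuous ((fun z : Cx R => ((('X^m : {poly C}).[z : C]) : Cx R)) \o (fst : C2 R -> Cx R))}.
  by apply: continuous_comp; [exact: cvg_fst | exact: cont_poly].
have c2 : {for x, continuous ((fun z : Cx R => ((('X^n : {poly C}).[z : C]) : Cx R)) \o (snd : C2 R -> Cx R))}.
  by apply: continuous_comp; [exact: cvg_snd | exact: cont_poly].
rewrite -E1 in c1; rewrite -E2 in c2.
exact: (cvg_pair c1 c2).
Qed.

Lemma inC_comp m n (X : set (C2 R)) f : inC X f ->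
  inC (powmap m n @^-1` X) (fun x => f (powmap m n x)).
Proof.
rewrite /inC => /subspace_continuousP hf.
apply/subspace_continuousP => x Xpx.
have H : powmap m n @ within (powmap m n @^-1` X) (nbhs x) --> within X (nbhs (powmap m n x)).
  move=> Q hQ.
  exact: (cont_powmap m n x _ hQ).
exact: (@cvg_comp _ _ _ (powmap m n) f (within _ (nbhs x)) (within X (nbhs (powmap m n x))) (nbhs (f (powmap m n x))) H (hf _ Xpx)).
Qed.
End Top3.
Arguments inC_comp {R} m n {X f}.

Lemma avg_lt (R : realType) (m n : nat) (hm : (0 < m)%N) (hn : (0 < n)%N) (a E : R[i])
  (r : 'I_m * 'I_n -> R[i]) : (forall h, `|a - r h| < E) ->
  `|a - (m * n)%:R^-1 * \sum_h r h| < E.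
Proof.
move=> hr.
have mn0 : (0 : R[i]) < (m * n)%:R by rewrite ltr0n muln_gt0 hm hn.
have c0 : (0 : R[i]) <= (m * n)%:R^-1 by rewrite invr_ge0 ltW.
have -> : a - (m * n)%:R^-1 * \sum_h r h = (m * n)%:R^-1 * \sum_h (a - r h).
  rewrite sumrB sumr_const card_prod !card_ord; field.
  by rewrite !pnatr_eq0 -!lt0n hm hn.
rewrite normrM (ger0_norm c0).
apply: (le_lt_trans (ler_wpM2l c0 (ler_norm_sum _ _ _))).
have hs : \sum_h `|a - r h| < \sum_(h : 'I_m * 'I_n) E.
  apply: ltr_sum => [|h _]; last exact: hr.
  by apply/hasP; exists (Ordinal hm, Ordinal hn) => //; rewrite mem_index_enum.
have c1 : (0 : R[i]) < (m * n)%:R^-1 by rewrite invr_gt0.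
rewrite -(ltr_pM2l c1) in hs.
apply: (lt_le_trans hs).
rewrite sumr_const card_prod !card_ord; rewrite le_eqVlt; apply/orP; left; apply/eqP; field.
by rewrite !pnatr_eq0 -!lt0n hm hn.
Qed.

Theorem lemma3p3 (R : realType) (X X11 : set (C2 R)) (m n : nat)
  (hm : (0 < m)%N) (hn : (0 < n)%N)
  (cX : compact X) (cX11 : compact X11)
  (hdecomp : powmap m n @^-1` X =
     \bigcup_(k in [set k : nat | (k < m)%N])
       \bigcup_(l in [set l : nat | (l < n)%N]) rot_set m n k l X11) :
  R_eq_C (powmap m n @^-1` X) -> R_eq_C X.
Proof.
move=> hE f; split; first exact: inRat_inC.
move=> hf.
have hfp := inC_comp m n hf.
have hr := (hE (fun x => f (powmap m n x))).2 hfp.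
move=> eps eps0.
have [p [q [qnz hpq]]] := hr eps eps0.
have [w pw] := prim_ex (R:=R) hm.
have [e pe] := prim_ex (R:=R) hn.
pose Q := @Qp R m n w e q.
pose N := @Np R m n w e p q.
exists (dec2 m n N), (dec2 m n Q).
pose c : R[i] := (m * n)%:R^-1.
have key : forall y : C2 R, X y -> exists r : 'I_m * 'I_n -> R[i],
   [/\ ev2 (dec2 m n Q) y != 0,
   ev2 (dec2 m n N) y / ev2 (dec2 m n Q) y = c * \sum_h r h &
   forall h, `|(f y : R[i]) - r h| < (eps%:C)%C].
  move=> y Xy.
  set x : C2 R := (((m.-root (y.1 : R[i])) : Cx R), ((n.-root (y.2 : R[i])) : Cx R)).
  have px : powmap m n x = y.
    by rewrite /powmap /x /= !rootCK //; case: y {Xy x}.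
  have mem1 : forall h : 'I_m * 'I_n, (powmap m n @^-1` X) (gx w e h x).
    by move=> h; change (X (powmap m n (gx w e h x))); rewrite (powmap_gx pw pe) px.
  have nz1 : forall h : 'I_m * 'I_n, ev2 q (gx w e h x) != 0.
    by move=> h; apply: qnz; exact: mem1.
  have nz2 : forall g h : 'I_m * 'I_n, ev2 q (gx w e h (gx w e g x)) != 0.
    by move=> g h; rewrite (gx_comp pw pe); exact: nz1.
  have Qx : ev2 Q x != 0.
    by rewrite /Q QpE; apply/prodf_neq0 => h _; exact: nz1.
  have hQ : ev2 (dec2 m n Q) y = ev2 Q x.
    have hinj := mulfI (mn_neq0 pw pe).
    apply: hinj => /=; rewrite -{1}px (filt pw pe) /Q.
    under eq_bigr do rewrite (Qp_inv pw pe).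
    by rewrite sumr_const card_prod !card_ord mulr_natl.
  exists (fun h => ev2 p (gx w e h x) / ev2 q (gx w e h x)).
  have hN : ev2 (dec2 m n N) y =
      c * ev2 Q x * \sum_(h : 'I_m * 'I_n) (ev2 p (gx w e h x) / ev2 q (gx w e h x)).
    have hinj := mulfI (mn_neq0 pw pe).
    apply: hinj => /=; rewrite -{1}px (filt pw pe) /N /Q.
    transitivity (\sum_(g : 'I_m * 'I_n) (c * ev2 (@Qp R m n w e q) x *
       \sum_(h : 'I_m * 'I_n) (ev2 p (gx w e h x) / ev2 q (gx w e h x)))).
      apply: eq_bigr => g _; rewrite NpE; last exact: nz2.
      by rewrite (Qp_inv pw pe) (S_inv pw pe).
    by rewrite sumr_const card_prod !card_ord mulr_natl.
  split.
  - by rewrite hQ.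
  - by rewrite hN hQ mulrAC mulfK.
  - move=> h; have := hpq _ (mem1 h).
    by rewrite (powmap_gx pw pe) px.
split.
  by move=> y Xy; have [r [? _ _]] := key y Xy.
move=> y Xy; have [r [_ -> hr']] := key y Xy.
exact: avg_lt.
Qed.
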